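(* The assignment $\mathrm{L}:\mathbf{TArb}\to\mathbf{FinArb}^<_\star$ (defined below) is a well-defined functor: for every object $G$ of $\mathbf{TArb}$, $\mathrm{L}(G)$ is a finite edge-ordered arborescence, and for every morphism $h:G\to H$ of $\mathbf{TArb}$, $\mathrm{L}(h)$ is a homomorphism of pointed edge-ordered graphs $\mathrm{L}(G)\to\mathrm{L}(H)$; moreover $\mathrm{L}$ preserves identities and composition.
   Context: A (directed) graph is $(V,\to)$ with $\to\subseteq V\times V$; $N(u)$ is the set of outgoing edges of $u$. A pointed graph has a distinguished vertex $v_0$; connected means every vertex is reachable by a path from $v_0$. A path is a finite sequence $v_1\to\cdots\to v_n$ of vertices joined by edges, with length $|\pi|$; co-initial paths share their source; $\pi\sqsubset\sigma$ means $\pi$ is a proper prefix of $\sigma$. A finite edge-ordered graph is a finite graph with a strict linear order $\triangleleft$ on each neighborhood. Lexicographic path order: if $\pi\sqsubset\sigma$ then $\pi\prec\sigma$ (symmetrically); otherwise, with $\zeta$ the longest common prefix, $u$ its target and $v_1,v_2$ the next vertices, $\pi\prec\sigma$ iff $u\to v_1\triangleleft u\to v_2$. Shortlex: $\pi\prec^s\sigma$ iff $|\pi|<|\sigma|$ or ($|\pi|=|\sigma|$ and $\pi\prec\sigma$). A homomorphism of finite pointed edge-ordered graphs $h:G\to H$ is a vertex map with (i) $u\to v$ implies $h(u)\to h(v)$; (ii) the distinguished vertex of $G$ is the unique vertex mapped to the distinguished vertex of $H$; (iii) $u\to v_1\triangleleft u\to v_2$ implies $h(u)\to h(v_1)\triangleleft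 h(u)\to h(v_2)$. An arborescence is a pointed graph with a unique path $v_0\rightsquigarrow u$ for every $u$. $\mathbf{FinArb}^<_\star$: finite edge-ordered arborescences with homomorphisms of pointed edge-ordered graphs. $\mathbf{TArb}$: objects are finite, pointed, connected, edge-ordered graphs $G$ for which there is a finite, connected, pointed, edge-ordered arborescence $T$ on the same vertices with the same distinguished point such that the edge relation of $G$ is the transitive closure of that of $T$ and $u\to v_1\triangleleft u\to v_2$ in $G$ iff $(v_0\rightsquigarrow v_1)\prec^s(v_0\rightsquigarrow v_2)$ for the unique paths in $T$; in such $G$ longest paths $u\rightsquigarrow v$ are unique. Morphisms of $\mathbf{TArb}$ are homomorphisms satisfying (i)–(iii) that map the longest path $u\rightsquigarrow v$ to the longest path $h(u)\rightsquigarrow h(v)$. $\mathrm{L}(G)$ has the vertices and distinguished point of $G$, contains an edge $u\to v$ iff it lies on the longest path $v_0\rightsquigarrow v$ in $G$, with neighborhood order inherited from $G$; $\mathrm{L}(h)(v)=h(v)$. *)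

(* Defs.v *)
From mathcomp Require Import all_boot.
Set Implicit Arguments. Unset Strict Implicit. Unset Printing Implicit Defensive.

(* A finite pointed edge-ordered graph on a finite vertex type V.
   edge u v      : u -> v
   root          : the distinguished vertex v0
   eord u v1 v2  : u->v1 <| u->v2 (order on the neighbourhood of u) *)
Record peog (V : finType) := PEOG {
  edge : V -> V -> Prop;
  root : V;
  eord : V -> V -> V -> Prop }.

Section Defs.
Variable V : finType.

(* A path x -> p_1 -> ... -> p_n is represented by its source x and the
   sequence p of the remaining vertices; its length is size p. *)
Fixpoint is_walk (e : V -> V -> Prop) (x : V) (p : seq V) : Prop :=
  match p with
  | [::] => True
  | y :: p' => e x y /\ is_walk e y p'
  end.

Definition is_path_from_to (e : V -> V -> Prop) (u v : V) (p : seq V) : Prop :=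
  is_walk e u p /\ last u p = v.

Definition edge_ordered (G : peog V) : Prop :=
  forall u,
    (forall v1 v2, eord G u v1 v2 -> edge G u v1 /\ edge G u v2) /\
    (forall v, ~ eord G u v v) /\
    (forall v1 v2 v3, eord G u v1 v2 -> eord G u v2 v3 -> eord G u v1 v3) /\
    (forall v1 v2, edge G u v1 -> edge G u v2 -> v1 <> v2 ->
                   eord G u v1 v2 \/ eord G u v2 v1).

Definition connected (G : peog V) : Prop :=
  forall u, exists p, is_path_from_to (edge G) (root G) u p.

Definition is_arborescence (G : peog V) : Prop :=
  forall u, exists! p, is_path_from_to (edge G) (root G) u p.

Definition is_finarb (G : peog V) : Prop :=
  edge_ordered G /\ is_arborescence G.

Fixpoint lex_lt (o : V -> V -> V -> Prop) (u : V) (s t : seq V) : Prop :=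
  match s, t with
  | [::], [::] => False
  | [::], _ :: _ => True
  | _ :: _, [::] => False
  | x :: s', y :: t' => if x == y then lex_lt o x s' t' else o u x y
  end.

Definition shortlex_lt (o : V -> V -> V -> Prop) (u : V) (s t : seq V) : Prop :=
  size s < size t \/ (size s = size t /\ lex_lt o u s t).

Definition tclosure (e : V -> V -> Prop) (u v : V) : Prop :=
  exists p, p <> [::] /\ is_path_from_to e u v p.

Definition is_tarb (G : peog V) : Prop :=
  edge_ordered G /\ connected G /\
  exists T : peog V,
    is_finarb T /\ connected T /\ root T = root G /\
    (forall u v, edge G u v <-> tclosure (edge T) u v) /\
    (forall u v1 v2, edge G u v1 -> edge G u v2 ->
       forall p1 p2, is_path_from_to (edge T) (root T) v1 p1 ->
                     is_path_from_to (edge T) (root T) v2 p2 ->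
       (eord G u v1 v2 <-> shortlex_lt (eord T) (root T) p1 p2)).

Definition is_longest (G : peog V) (u v : V) (p : seq V) : Prop :=
  is_path_from_to (edge G) u v p /\
  forall q, is_path_from_to (edge G) u v q -> size q <= size p.

Definition L_edge (G : peog V) (u v : V) : Prop :=
  exists p, is_longest G (root G) v p /\ (u, v) \in zip (root G :: p) p.

Definition Lgraph (G : peog V) : peog V :=
  PEOG (L_edge G) (root G)
       (fun u v1 v2 => eord G u v1 v2 /\ L_edge G u v1 /\ L_edge G u v2).

End Defs.

Definition is_hom (V W : finType) (G : peog V) (H : peog W) (h : V -> W) : Prop :=
  (forall u v, edge G u v -> edge H (h u) (h v)) /\
  (forall x, h x = root H <-> x = root G) /\
  (forall u v1 v2, eord G u v1 v2 -> eord H (h u) (h v1) (h v2)).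

Definition tarb_mor (V W : finType) (G : peog V) (H : peog W) (h : V -> W) : Prop :=
  is_hom G H h /\
  (forall u v p, is_longest G u v p -> is_longest H (h u) (h v) (map h p)).

Definition Lmap (V W : finType) (h : V -> W) : V -> W := fun v => h v.

(* Main.v *)
Require Import Defs.
From mathcomp Require Import all_boot.
From mathcomp Require Import zify.

Section Aux.
Variable V : finType.
Implicit Types (e f : V -> V -> Prop) (x u v : V) (p q : seq V).

Lemma walk_impl e f : (forall u v, e u v -> f u v) ->
  forall x p, is_walk e x p -> is_walk f x p.
Proof. move=> H x p; elim: p x => //= y p IH x [H1 H2]; split; auto. Qed.

Lemma walk_iff e f : (forall u v, e u v <-> f u v) ->
  forall x p, is_walk e x p <-> is_walk f x p.
Proof.
move=> H x p; split; apply: walk_impl => a b; by move/H.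
Qed.

Lemma walk_cat e x p q :
  is_walk e x (p ++ q) <-> is_walk e x p /\ is_walk e (last x p) q.
Proof. elim: p x => [|y p IH] x /=; first tauto. rewrite IH; tauto. Qed.

Lemma walk_zip e x p u v : is_walk e x p -> (u, v) \in zip (x :: p) p -> e u v.
Proof.
elim: p x => //= y p IH x [H1 H2]; rewrite in_cons => /orP [/eqP [-> ->] //|].
exact: IH.
Qed.

Lemma zip_last x p y : (last x p, y) \in zip (x :: rcons p y) (rcons p y).
Proof.
elim: p x => [|a p IH] x /=; first by rewrite mem_seq1.
by rewrite in_cons IH orbT.
Qed.

Lemma expand e f (Hef : forall u v, e u v -> tclosure f u v) x p :
  is_walk e x p -> exists p', is_walk f x p' /\ last x p' = last x p /\
    size p <= size p' /\ (size p' <= size p -> is_walk f x p).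
Proof.
elim: p x => [|y p IH] x /=.
  by move=> _; exists [::].
move=> [Hxy Hw].
have [s [Hs0 [Hsw Hsl]]] := Hef _ _ Hxy.
have [p' [Hw' [Hl' [Hsz Hsz']]]] := IH _ Hw.
exists (s ++ p'); rewrite walk_cat last_cat Hsl; split; first by split=> //; rewrite Hsl.
split; first done.
rewrite size_cat; case: s Hs0 Hsw Hsl => [//|a s] _ Hsw Hsl /=.
split; first lia.
case: s Hsw Hsl => [|b s] Hsw Hsl /=; last lia.
move=> Hle; simpl in Hsw, Hsl; subst a; split; first by case: Hsw.
apply: Hsz'; lia.
Qed.

Lemma tarb_L_edge (G T : peog V) : is_finarb T -> Defs.root T = Defs.root G ->
  (forall u v, edge G u v <-> tclosure (edge T) u v) ->
  forall u v, L_edge G u v <-> edge T u v.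
Proof.
move=> [_ HT] Hr HGT.
have HeG : forall u v, edge G u v -> tclosure (edge T) u v by move=> ? ?; apply HGT.
have HTG : forall u v, edge T u v -> edge G u v.
  by move=> a b H; apply/HGT; exists [:: b].
move=> u v; split.
- move=> [p [[[Hpw Hpl] Hmax] Hz]].
  have [t [[Htw Htl] Hu]] := HT v.
  have Ht : size t <= size p.
    apply: Hmax; split; first by rewrite -Hr; exact: walk_impl Htw.
    by rewrite -Hr.
  have [p' [Hw' [Hl' [_ Hsz']]]] := @expand _ _ HeG _ _ Hpw.
  have Etp : t = p'.
    apply: Hu; split; first by rewrite Hr.
    by rewrite Hr Hl' Hpl.
  subst p'.
  exact: walk_zip (Hsz' Ht) Hz.
- move=> Huv.
  have [t [[Htw Htl] _]] := HT u.
  have Hw : is_walk (edge T) (Defs.root T) (rcons t v).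
    by rewrite -cats1 walk_cat Htl.
  exists (rcons t v); split; last by rewrite -Hr -Htl; exact: zip_last.
  split.
    split; last by rewrite last_rcons.
    rewrite -Hr; exact: walk_impl Hw.
  move=> q [Hqw Hql].
  have [q' [Hw' [Hl' [Hsz _]]]] := @expand _ _ HeG _ _ Hqw.
  have [t2 [_ Hu2]] := HT v.
  have E1 := Hu2 (rcons t v) (conj Hw (last_rcons _ _ _)).
  have E2 : t2 = q'.
    apply: Hu2; split; first by rewrite Hr.
    by rewrite Hr Hl' Hql.
  by rewrite -E1 E2.
Qed.

Lemma zip_map_mem (W : eqType) (h : V -> W) s t u v :
  (u, v) \in zip s t -> (h u, h v) \in zip (map h s) (map h t).
Proof.
elim: s t => [|a s IH] [|b t] //=; rewrite !in_cons => /orP [/eqP [-> ->]|H].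
  by rewrite eqxx.
by rewrite IH ?orbT.
Qed.

End Aux.

Theorem lemma10p7 :
  (forall (V : finType) (G : peog V), is_tarb G -> is_finarb (Lgraph G)) /\
  (forall (V W : finType) (G : peog V) (H : peog W) (h : V -> W),
      is_tarb G -> is_tarb H -> tarb_mor G H h ->
      is_hom (Lgraph G) (Lgraph H) (Lmap h)) /\
  (forall (V : finType) (G : peog V), is_tarb G ->
      Lmap (fun x : V => x) =1 (fun x : V => x)) /\
  (forall (U V W : finType) (F : peog U) (G : peog V) (H : peog W)
          (h : U -> V) (g : V -> W),
      is_tarb F -> is_tarb G -> is_tarb H ->
      tarb_mor F G h -> tarb_mor G H g ->
      Lmap (g \o h) =1 Lmap g \o Lmap h).
Proof.
split.
  move=> V G [HeoG [Hcon [T [[HeoT HarT] [_ [Hr [HGT _]]]]]]].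
  have HL := @tarb_L_edge _ _ _ (conj HeoT HarT) Hr HGT.
  have LG : forall u v, L_edge G u v -> edge G u v.
    by move=> u v /HL H; apply/HGT; exists [:: v].
  split.
    move=> u /=; have [H1 [H2 [H3 H4]]] := HeoG u.
    split; first by move=> v1 v2 [_ [? ?]].
    split; first by move=> v [H _]; exact: H2 v H.
    split.
      move=> a b c [Hab [Ha Hb]] [Hbc [_ Hc]]; split; [exact: H3 Hab Hbc|done].
    move=> a b Ha Hb Hne; case: (H4 a b (LG _ _ Ha) (LG _ _ Hb) Hne) => H;
      [left|right]; done.
  move=> u; have [t [[Htw Htl] Hu]] := HarT u.
  have Hiff := @walk_iff _ _ _ HL.
  exists t; split.
    by split=> //=; [apply/Hiff; rewrite -Hr | rewrite -Hr].
  move=> t' [/= Hw Hl]; apply: Hu; split; first by rewrite Hr; apply/Hiff.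
  by rewrite Hr.
split.
  move=> V W G H h _ _ [[Hhe [Hhr Hho]] Hlong].
  have HrG : h (Defs.root G) = Defs.root H by apply/Hhr.
  have LE : forall u v, L_edge G u v -> L_edge H (h u) (h v).
    move=> u v [p [Hp Hz]]; exists (map h p); split.
      by rewrite -HrG; exact: Hlong.
    by rewrite -HrG -map_cons; exact: zip_map_mem.
  split; first by move=> u v; exact: LE.
  split; first exact: Hhr.
  move=> u a b [Ho [Ha Hb]]; split; first exact: Hho.
  by split; apply: LE.
split; by [].
Qed.
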